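(* Let $\kappa\in\mathbb{C}$, $0\le n\le N$, and let $\lambda_1,\dots,\lambda_N,z_1,\dots,z_n$ be generic. Consider $F(z_{n+1},\dots,z_N)=\det_N\Omega_\kappa(\{z_1,\dots,z_N\},\{\lambda_1,\dots,\lambda_N\}|\{z_1,\dots,z_N\})$ as a meromorphic function of $z_{n+1},\dots,z_N$. Then the iterated residue of $F$ at $z_{n+1}=\lambda_{n+1},\dots,z_N=\lambda_N$ equals $$\prod_{a=n+1}^N\mathcal Y_\kappa\bigl(\lambda_a\big|\{z_1,\dots,z_n,\lambda_{n+1},\dots,\lambda_N\}\bigr)\cdot\det_n\Omega_\kappa\bigl(\{z_1,\dots,z_n\},\{\lambda_1,\dots,\lambda_n\}\big|\{z_1,\dots,z_n,\lambda_{n+1},\dots,\lambda_N\}\bigr).$$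
   Context: Fix $\eta\in\mathbb{C}$ with $\sinh\eta\ne0$ and $\xi_1,\dots,\xi_M\in\mathbb{C}$. $a(\lambda)=\prod_{j=1}^M\sinh(\lambda-\xi_j+\eta)$, $d(\lambda)=\prod_{j=1}^M\sinh(\lambda-\xi_j)$, $t(\lambda,\mu)=\frac{\sinh\eta}{\sinh(\lambda-\mu)\sinh(\lambda-\mu+\eta)}$. For a set $\{\nu_1..\nu_L\}$, $\mathcal Y_\kappa(\mu|\{\nu\})=a(\mu)\prod_{k=1}^L\sinh(\nu_k-\mu+\eta)+\kappa d(\mu)\prod_{k=1}^L\sinh(\nu_k-\mu-\eta)$. For sets $\{\lambda_1..\lambda_n\}$, $\{\mu_1..\mu_n\}$, $\{\nu_1..\nu_{n'}\}$, $\Omega_\kappa(\{\lambda\},\{\mu\}|\{\nu\})$ is the $n\times n$ matrix with $(\Omega_\kappa)_{jk}=a(\mu_k)t(\lambda_j,\mu_k)\prod_{c=1}^{n'}\sinh(\nu_c-\mu_k+\eta)-\kappa\,d(\mu_k)t(\mu_k,\lambda_j)\prod_{c=1}^{n'}\sinh(\nu_c-\mu_k-\eta)$ (rows indexed by the first set, columns by the second). *)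

(* Defs.v *)
From HB Require Import structures.
From mathcomp Require Import all_boot all_order all_algebra.
From mathcomp Require Import all_classical all_reals all_analysis.
From mathcomp Require Import complex.
Import Order.TTheory GRing.Theory Num.Theory.
Import numFieldTopology.Exports numFieldNormedType.Exports.
Set Implicit Arguments. Unset Strict Implicit. Unset Printing Implicit Defensive.
Local Open Scope ring_scope.
Local Open Scope complex_scope.
Local Open Scope classical_set_scope.

Definition Cplx (R : realType) : Type := R[i].
HB.instance Definition _ (R : realType) := Num.ClosedField.on (Cplx R).
HB.instance Definition _ (R : realType) :=
  PseudoPointedMetric.copy (Cplx R) (Cplx R)^o.

Section Defs.
Variable R : realType.
Local Notation C := (Cplx R).

Definition cexp (z : C) : C :=
  let: x +i* y := z in ((expR x)%:C * (cos y +i* sin y)%C)%R.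

Definition csinh (z : C) : C := (cexp z - cexp (- z)) / 2%:R.

Definition afun (eta : C) (xi : seq C) (l : C) : C :=
  \prod_(x <- xi) csinh (l - x + eta).
Definition dfun (xi : seq C) (l : C) : C :=
  \prod_(x <- xi) csinh (l - x).

Definition tfun (eta l m : C) : C :=
  csinh eta / (csinh (l - m) * csinh (l - m + eta)).

Definition Yfun (eta : C) (xi : seq C) (kappa mu : C) (nu : seq C) : C :=
  afun eta xi mu * \prod_(v <- nu) csinh (v - mu + eta)
  + kappa * dfun xi mu * \prod_(v <- nu) csinh (v - mu - eta).

Definition Omega (eta : C) (xi : seq C) (kappa : C) (n : nat)
    (lam mu nu : seq C) : 'M[C]_n :=
  \matrix_(j < n, k < n)
    (afun eta xi (nth 0 mu k) * tfun eta (nth 0 lam j) (nth 0 mu k)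
       * \prod_(v <- nu) csinh (v - nth 0 mu k + eta)
     - kappa * dfun xi (nth 0 mu k) * tfun eta (nth 0 mu k) (nth 0 lam j)
       * \prod_(v <- nu) csinh (v - nth 0 mu k - eta)).

(* Residue of f at a (simple) pole l:  lim_{z -> l, z <> l} (z - l) f(z). *)
Definition residue (f : C -> C) (l : C) : C :=
  lim ((fun z => (z - l) * f z) @ l^').

(* Iterated residue of a function F of the variables (w_1, ..., w_m)
   (passed as a list) at w_1 = l_1, ..., w_m = l_m: first the residue in
   w_1 is taken (the other variables being held fixed), then in w_2, ... *)
Fixpoint iter_residue (F : seq C -> C) (ls : seq C) : C :=
  match ls with
  | [::] => F [::]
  | l :: ls' => iter_residue (fun ws => residue (fun w => F (w :: ws)) l) ls'
  end.

Definition generic_points (eta : C) (s : seq C) : Prop :=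
  forall i j : nat, (i < size s)%N -> (j < size s)%N -> i <> j ->
    csinh (nth 0 s i - nth 0 s j) <> 0 /\
    csinh (nth 0 s i - nth 0 s j + eta) <> 0.

End Defs.

(* Main.v *)
Require Import Defs.
From HB Require Import structures.
From mathcomp Require Import all_boot all_order all_algebra.
From mathcomp Require Import all_classical all_reals all_analysis.
From mathcomp Require Import complex.
Import Order.TTheory GRing.Theory Num.Theory.
Import numFieldTopology.Exports numFieldNormedType.Exports.
Local Open Scope ring_scope.
From mathcomp Require Import ring lra zify.

Section S.
Local Open Scope classical_set_scope.
Variable R : realType.
Local Notation C := (Cplx R).

Lemma hC : hausdorff_space C.
Proof. exact: (@norm_hausdorff _ (Cplx R)^o). Qed.

Lemma der_cvg (f : R -> R) (x df : R) : is_derive (x : R^o) (1 : R^o) (f : R^o -> R^o) df ->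
  (fun h => h^-1 * (f (h + x) - f x)) @ 0^' --> df.
Proof.
case=> Hd Hv. rewrite -Hv /derive. 
move: Hd; rewrite /derivable => Hd.
have E : (fun h : R => h^-1 * (f (h + x) - f x)) = (fun h : R => h^-1 *: ((f \o shift x) h%:A - f x)).
  apply: funext => h /=. by rewrite /GRing.scale /= mulr1.
rewrite E. exact: Hd.
Qed.

Lemma q_cont (f : R -> R) df : is_derive (0 : R^o) (1 : R^o) (f : R^o -> R^o) df ->
  (fun x => (f x - f 0 - df * x) / x) @ (0:R) --> 0.
Proof.
move=> H.
set q := fun x => _.
have Hq0 : q 0 = 0 by rewrite /q mulr0 subr0 subrr mul0r.
suff Hc : q @ (0:R)^' --> q 0.
  have Hcont := (proj2 (continuous_withinNx q 0) Hc).
  apply: cvg_trans Hcont _. rewrite Hq0. exact: cvg_refl.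
rewrite Hq0.
have H1 := der_cvg _ _ _ H.
have H2 : (fun h => h^-1 * (f (h + 0) - f 0) - df) @ (0:R)^' --> df - df.
  apply: cvgB => //. exact: cvg_cst.
rewrite subrr in H2.
apply: cvg_trans H2. apply: near_eq_cvg. near=> h.
have hn : h != 0 by near: h; exact: nbhs_dnbhs_neq.
rewrite /q addr0. field. exact: hn.
Unshelve. all: by end_near.
Qed.


Lemma normcR (x : R) : `|(x%:C)%C : C| = (`|x|)%:C%C.
Proof. by rewrite normc_def /= expr0n /= addr0 sqrtr_sqr. Qed.

Lemma cvgCP T (F : set_system T) {FF : Filter F} (f : T -> C) (a : C) :
  f @ F --> a <-> forall e : C, 0 < e -> \forall t \near F, `|a - f t| < e.
Proof. exact: (@cvgrPdist_lt _ (Cplx R)^o _ _ _ f a). Qed.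
Arguments cvgCP {T F FF f a}.

Lemma cvg_Re T (F : set_system T) {FF : Filter F} (f : T -> C) (a : C) :
  f @ F --> a -> (fun t => complex.Re (f t)) @ F --> complex.Re a.
Proof.
move=> /cvgCP H; apply/cvgrPdist_lt => e e0.
have e0' : 0 < (e%:C)%C :> C by rewrite ltcR.
move: (H _ e0'); apply: filterS => t Ht.
have := normc_ge_Re (a - f t).
move=> /le_lt_trans /(_ Ht). rewrite ltcR.
by case: (a) => ? ?; case: (f t) => ? ?.
Qed.
Arguments cvg_Re {T F FF f a}.

Lemma cvg_RtoC T (F : set_system T) {FF : Filter F} (g : T -> R) (a : R) :
  g @ F --> a -> (fun t => (g t)%:C%C : C) @ F --> ((a%:C)%C : C).
Proof.
move=> /cvgrPdist_lt H; apply/cvgCP => e e0.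
move: (e0); rewrite ltcE /= => /andP[/eqP Ie Re0].
have -> : e = ((complex.Re e)%:C)%C by case: e e0 Ie Re0 => ? ? /= _ ->.
move: (H _ Re0); apply: filterS => t Ht.
by rewrite -rmorphB normcR ltcR.
Qed.
Arguments cvg_RtoC {T F FF g a}.
Lemma cvg_Im T (F : set_system T) {FF : Filter F} (f : T -> C) (a : C) :
  f @ F --> a -> (fun t => complex.Im (f t)) @ F --> complex.Im a.
Proof.
move=> H.
have H2 : (fun t => (- 'i%C) * f t : C) @ F --> ((- 'i%C) * a : C).
  apply: cvgM; [exact: cvg_cst| exact: H].
have E : forall z : C, complex.Re (- 'i%C * z) = complex.Im z.
  by case=> x y; simpl; rewrite oppr0 mul0r add0r mulN1r opprK.
have := cvg_Re H2.
move=> /(_ FF). rewrite E. by under eq_fun do rewrite E.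
Qed.
Arguments cvg_Im {T F FF f a}.

Lemma cexpE (z : C) : cexp z = ((expR (complex.Re z))%:C%C : C) *
   (((cos (complex.Im z))%:C%C : C) + ('i%C : C) * ((sin (complex.Im z))%:C%C : C)).
Proof. case: z => x y /=; congr (_ * _). by rewrite [LHS]complexE. Qed.

Lemma cvg_real_comp T (F : set_system T) {FF : Filter F} (g : R -> R) (f : T -> R) (a : R) :
  continuous g -> f @ F --> a -> (fun t => g (f t)) @ F --> g a.
Proof. move=> Hg Hf. exact: (continuous_cvg _ (Hg a) Hf). Qed.
Arguments cvg_real_comp {T F FF g f a}.

Lemma cvg_cexp T (F : set_system T) {FF : Filter F} (f : T -> C) (a : C) :
  f @ F --> a -> (fun t => cexp (f t)) @ F --> cexp a.
Proof.
move=> H.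
have -> : (@cexp R) = (fun z : C => ((expR (complex.Re z))%:C%C : C) *
   (((cos (complex.Im z))%:C%C : C) + ('i%C : C) * ((sin (complex.Im z))%:C%C : C))).
  by apply: funext => z; rewrite cexpE.
apply: (@cvgM (Cplx R) T F FF).
  apply: (cvg_RtoC (FF:=FF)). apply: (cvg_real_comp (FF:=FF)); first exact: continuous_expR.
  exact: (cvg_Re (FF:=FF)).
apply: (@cvgD (Cplx R) (Cplx R)^o T F FF).
  apply: (cvg_RtoC (FF:=FF)). apply: (cvg_real_comp (FF:=FF)); first exact: continuous_cos.
  exact: (cvg_Im (FF:=FF)).
apply: (@cvgM (Cplx R) T F FF); first exact: cvg_cst.
apply: (cvg_RtoC (FF:=FF)). apply: (cvg_real_comp (FF:=FF)); first exact: continuous_sin.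
exact: (cvg_Im (FF:=FF)).
Qed.
Arguments cvg_cexp {T F FF f a}.

Lemma cvg_csinh T (F : set_system T) {FF : Filter F} (f : T -> C) (a : C) :
  f @ F --> a -> (fun t => csinh (f t)) @ F --> csinh a.
Proof.
move=> H. rewrite /csinh. apply: cvgM; last exact: cvg_cst.
apply: (@cvgB (Cplx R) (Cplx R)^o T F FF); first exact: (cvg_cexp (FF:=FF)).
apply: (cvg_cexp (FF:=FF)). exact: (@cvgN (Cplx R) (Cplx R)^o T F FF).
Qed.
Arguments cvg_csinh {T F FF f a}.


Lemma normc_ge_Im' (z : C) : (`|complex.Im z|)%:C%C <= `|z|.
Proof.
have E : complex.Re (- 'i%C * z) = complex.Im z.
  by case: z => x y; simpl; rewrite oppr0 mul0r add0r mulN1r opprK.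
have := normc_ge_Re (- 'i%C * z). rewrite E.
have -> : `|(- 'i%C * z : C)| = `|z|.
  rewrite normrM normrN.
  have -> : `|('i%C : C)| = 1.
    rewrite normc_def /=. by rewrite expr1n -[(0:R) ^+ 2]/((0:R) * 0) mul0r add0r sqrtr1.
  by rewrite mul1r.
by [].
Qed.

Lemma key_id (K : comRingType) (i a b A1 qc qs : K) :
  (1 + a + A1*a)*((1 + qc*b) + i*(b + qs*b)) - 1 - (a + i*b)
  = A1*a + ((1 + a + A1*a)*qc + i*((a + A1*a)*qs + (a + A1*a) + qs))*b.
Proof. ring. Qed.

Lemma qid (g : R -> R) (d x : R) : g x - g 0 - d * x = ((g x - g 0 - d * x) / x) * x.
Proof.
have [->|hx] := eqVneq x 0; first by rewrite !mulr0 subr0 subrr.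
by rewrite divfK.
Qed.



Lemma cvg_mul0 T (F : set_system T) {FF : Filter F} (X Y : T -> C) :
  X @ F --> 0 -> (forall t, `|Y t| <= 1) -> (fun t => X t * Y t) @ F --> 0.
Proof.
move=> /cvgCP HX HY; apply/cvgCP => e e0.
move: (HX e e0); apply: filterS => t.
rewrite !sub0r !normrN normrM => Ht. apply: le_lt_trans Ht.
rewrite -[X in _ <= X]mulr1. apply: ler_wpM2l => //.
Qed.
Arguments cvg_mul0 {T F FF X Y}.

Lemma bnd_div (u v : C) : `|v| <= `|u| -> `|v / u| <= 1.
Proof.
move=> H. have [->|hu] := eqVneq u 0; first by rewrite invr0 mulr0 normr0 ler01.
rewrite normf_div ler_pdivrMr ?normr_gt0 // mul1r //.
Qed.

Lemma bnd_Re (u : C) : `|((complex.Re u)%:C%C : C) / u| <= 1.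
Proof. apply: bnd_div. rewrite normcR. exact: normc_ge_Re. Qed.

Lemma bnd_Im (u : C) : `|((complex.Im u)%:C%C : C) / u| <= 1.
Proof. apply: bnd_div. rewrite normcR. exact: normc_ge_Im'. Qed.

Lemma div_id (K : fieldType) (c u P A Q B : K) : u != 0 ->
  c - 1 - u = P*A + Q*B -> (c - 1)/u = 1 + P*(A/u) + Q*(B/u).
Proof.
move=> hu h. have -> : c - 1 = u + (P*A + Q*B) by rewrite -h; ring.
by field.
Qed.



Lemma cexp_lin T (F : set_system T) {FF : Filter F} (u : T -> C) :
  u @ F --> (0:C) -> (\forall t \near F, u t != 0) ->
  (fun t => (cexp (u t) - 1) / u t) @ F --> (1:C).
Proof.
move=> Hu Hnz.
pose a t := complex.Re (u t). pose b t := complex.Im (u t).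
have Ha : a @ F --> 0 by have := cvg_Re (FF:=FF) Hu.
have Hb : b @ F --> 0 by have := cvg_Im (FF:=FF) Hu.
pose qe (x : R) := (expR x - expR 0 - expR 0 * x) / x.
pose qc (x : R) := (cos x - cos 0 - (- sin 0) * x) / x.
pose qs (x : R) := (sin x - sin 0 - cos 0 * x) / x.
have Hqe : qe @ (0:R) --> 0 := q_cont _ _ (is_derive_expR 0).
have Hqc : qc @ (0:R) --> 0 := q_cont _ _ (is_derive_cos 0).
have Hqs : qs @ (0:R) --> 0 := q_cont _ _ (is_derive_sin 0).
have Ee x : expR x = 1 + x + qe x * x.
  have := qid expR (expR 0) x. rewrite -/(qe x) expR0 mul1r => <-. ring.
have Ec x : cos x = 1 + qc x * x.
  have := qid cos (- sin 0) x. rewrite -/(qc x) cos0 sin0 => <-. ring.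
have Es x : sin x = x + qs x * x.
  have := qid sin (cos 0) x. rewrite -/(qs x) cos0 sin0 => <-. ring.
pose A t : C := ((a t)%:C)%C. pose B t : C := ((b t)%:C)%C.
pose A1 t : C := ((qe (a t))%:C)%C.
pose QC t : C := ((qc (b t))%:C)%C. pose QS t : C := ((qs (b t))%:C)%C.
pose Q t : C := (1 + A t + A1 t * A t) * QC t + 'i%C * ((A t + A1 t * A t) * QS t + (A t + A1 t * A t) + QS t).
have Hid t : cexp (u t) - 1 - u t = A1 t * A t + Q t * B t.
  rewrite cexpE [X in _ - X = _](complexE (u t)).
  rewrite (Ee (complex.Re (u t))) (Ec (complex.Im (u t))) (Es (complex.Im (u t))).
  rewrite /Q /A /B /A1 /QC /QS /a /b.
  move: (complex.Re (u t)) (complex.Im (u t)) => x y.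
  move: (qe x) (qc y) (qs y) => e1 c1 s1.
  rewrite !rmorphD !rmorphM rmorph1.
  exact: key_id.
have cD := fun f g (x y : C) (h1 : f @ F --> x) (h2 : g @ F --> y) => @cvgD (Cplx R) (Cplx R)^o T F FF f g x y h1 h2.
have cM := fun f g (x y : C) (h1 : f @ F --> x) (h2 : g @ F --> y) => @cvgM (Cplx R) T F FF f g x y h1 h2.
have cC := fun x : C => @cvg_cst (Cplx R) x T F FF.
have HA : A @ F --> (0:C) := cvg_RtoC (FF:=FF) Ha.
have HB : B @ F --> (0:C) := cvg_RtoC (FF:=FF) Hb.
have HA1 : A1 @ F --> (0:C) := cvg_RtoC (FF:=FF) (cvg_comp _ _ Ha Hqe).
have HQC : QC @ F --> (0:C) := cvg_RtoC (FF:=FF) (cvg_comp _ _ Hb Hqc).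
have HQS : QS @ F --> (0:C) := cvg_RtoC (FF:=FF) (cvg_comp _ _ Hb Hqs).
have HQ : Q @ F --> (0:C).
  have H1 := cM _ _ _ _ (cD _ _ _ _ (cD _ _ _ _ (cC 1) HA) (cM _ _ _ _ HA1 HA)) HQC.
  have H2 := cM _ _ _ _ (cC 'i%C) (cD _ _ _ _ (cD _ _ _ _ (cM _ _ _ _ (cD _ _ _ _ HA (cM _ _ _ _ HA1 HA)) HQS) (cD _ _ _ _ HA (cM _ _ _ _ HA1 HA))) HQS).
  have := cD _ _ _ _ H1 H2. by rewrite !(mulr0, mul0r, addr0).
pose g t : C := 1 + A1 t * (A t / u t) + Q t * (B t / u t).
have Hg : g @ F --> (1:C).
  have := cD _ _ _ _ (cD _ _ _ _ (cC 1) (cvg_mul0 (FF:=FF) HA1 (fun t => bnd_Re (u t))))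
     (cvg_mul0 (FF:=FF) HQ (fun t => bnd_Im (u t))).
  by rewrite !addr0.
apply: cvg_trans Hg. apply: near_eq_cvg.
move: Hnz; apply: filterS => t ht.
rewrite /g. symmetry. by apply: div_id.
Qed.
Arguments cexp_lin {T F FF u}.

Lemma two_neq0 : (2%:R : C) != 0.
Proof. by rewrite pnatr_eq0. Qed.

Lemma sinh_id (u : C) : u != 0 ->
  csinh u / u = ((cexp u - 1) / u + (cexp (- u) - 1) / (- u)) / 2%:R.
Proof.
move=> hu. rewrite /csinh. have h2 := two_neq0.
by field; rewrite ?hu ?h2 ?oppr_eq0.
Qed.

Lemma csinh_lin T (F : set_system T) {FF : Filter F} (u : T -> C) :
  u @ F --> (0:C) -> (\forall t \near F, u t != 0) ->
  (fun t => u t / csinh (u t)) @ F --> (1:C).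
Proof.
move=> Hu Hnz.
have H1 := cexp_lin (FF:=FF) Hu Hnz.
have Hu' : (fun t => - u t) @ F --> (0:C).
  have := @cvgN (Cplx R) (Cplx R)^o T F FF _ _ Hu. by rewrite oppr0.
have Hnz' : \forall t \near F, - u t != 0.
  by move: Hnz; apply: filterS => t; rewrite oppr_eq0.
have H2 := cexp_lin (FF:=FF) Hu' Hnz'.
have H3 := @cvgD (Cplx R) (Cplx R)^o T F FF _ _ _ _ H1 H2.
have H4 := @cvgM (Cplx R) T F FF _ _ _ _ H3 (@cvg_cst (Cplx R) (2%:R : C)^-1 T F FF).
have E : (1 + 1 : C) * 2%:R^-1 = 1 by rewrite -mulr2n divff // two_neq0.
rewrite E in H4.
have H5 : (fun t => csinh (u t) / u t) @ F --> (1:C).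
  apply: cvg_trans H4. apply: near_eq_cvg.
  move: Hnz; apply: filterS => t ht. by rewrite sinh_id.
have H6 := @cvgV (Cplx R) T F FF _ _ (oner_neq0 _) H5.
rewrite invr1 in H6. apply: cvg_trans H6. apply: near_eq_cvg.
move: Hnz; apply: filterS => t _. by rewrite /unstable.inv_fun invf_div.
Qed.
Arguments csinh_lin {T F FF u}.

Lemma cvg_bsum T (F : set_system T) {FF : Filter F} (I : Type) (r : seq I)
  (G : I -> T -> C) (L : I -> C) :
  (forall i, G i @ F --> L i) ->
  (fun t => \sum_(i <- r) G i t) @ F --> \sum_(i <- r) L i.
Proof.
move=> HG; elim: r => [|x r IH].
  have -> : (fun t => \sum_(i <- [::]) G i t) = (fun _ => 0) by apply: funext => t; rewrite big_nil.
  rewrite big_nil. exact: (@cvg_cst (Cplx R) 0 T F FF).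
have -> : (fun t => \sum_(i <- x :: r) G i t) = (fun t => G x t + \sum_(i <- r) G i t)
  by apply: funext => t; rewrite big_cons.
rewrite big_cons. exact: (@cvgD (Cplx R) (Cplx R)^o T F FF _ _ _ _ (HG x) IH).
Qed.
Arguments cvg_bsum {T F FF I r G L}.

Lemma cvg_bprod T (F : set_system T) {FF : Filter F} (I : Type) (r : seq I)
  (G : I -> T -> C) (L : I -> C) :
  (forall i, G i @ F --> L i) ->
  (fun t => \prod_(i <- r) G i t) @ F --> \prod_(i <- r) L i.
Proof.
move=> HG; elim: r => [|x r IH].
  have -> : (fun t => \prod_(i <- [::]) G i t) = (fun _ => 1) by apply: funext => t; rewrite big_nil.
  rewrite big_nil. exact: (@cvg_cst (Cplx R) 1 T F FF).
have -> : (fun t => \prod_(i <- x :: r) G i t) = (fun t => G x t * \prod_(i <- r) G i t)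
  by apply: funext => t; rewrite big_cons.
rewrite big_cons. exact: (@cvgM (Cplx R) T F FF _ _ _ _ (HG x) IH).
Qed.
Arguments cvg_bprod {T F FF I r G L}.

Lemma cvg_det T (F : set_system T) {FF : Filter F} n (M : T -> 'M[C]_n) (A : 'M[C]_n) :
  (forall i j, (fun t => M t i j) @ F --> A i j) ->
  (fun t => \det (M t)) @ F --> \det A.
Proof.
move=> HM. rewrite /determinant.
apply: (cvg_bsum (FF:=FF)) => s.
apply: (@cvgM (Cplx R) T F FF); first exact: (@cvg_cst (Cplx R) _ T F FF).
apply: (cvg_bprod (FF:=FF)) => i. exact: HM.
Qed.
Arguments cvg_det {T F FF n M A}.

Lemma cvg_dn (f : C -> C) (l a : C) : f @ l --> a -> f @ l^' --> a.
Proof. move=> H. exact: cvg_trans (cvg_app _ (cvg_within _)) H. Qed.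

Lemma cvg_wl (l : C) : (fun w : C => w - l) @ l^' --> (0:C).
Proof.
apply: cvg_dn. apply/(cvgCP (FF:=nbhs_filter l)) => e e0.
have Hid : (fun w : C => w) @ l --> l := cvg_id.
move: (proj1 (cvgCP (FF:=nbhs_filter l)) Hid e e0). apply: filterS => w.
by rewrite sub0r opprB.
Qed.


Lemma res_det n (r : 'I_n) (M : C -> 'M[C]_n) (A : 'M[C]_n) (l Y : C) :
 (forall i j, i != r -> (fun w => M w i j) @ l^' --> A i j) ->
 (forall j, j != r -> (fun w => M w r j) @ l^' --> A r j) ->
 (fun w => (w - l) * M w r r) @ l^' --> Y ->
 (fun w => (w - l) * \det (M w)) @ l^' --> Y * cofactor A r r.
Proof.
move=> H1 H2 H3.
have -> : (fun w => (w - l) * \det (M w)) =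
   (fun w => \sum_j ((w - l) * M w r j) * cofactor (M w) r j).
  apply: funext => w. rewrite (expand_det_row _ r) big_distrr /=.
  by apply: eq_bigr => j _; rewrite mulrA.
have -> : Y * cofactor A r r = \sum_j (if j == r then Y else 0) * cofactor A r j.
  rewrite (bigD1 r) //= eqxx big1 ?addr0 // => j /negbTE ->. by rewrite mul0r.
apply: (cvg_bsum (FF:=dnbhs_filter l)) => j.
apply: (@cvgM (Cplx R) C _ (dnbhs_filter l)).
  case: eqP => [->|/eqP hj]; first exact: H3.
  have := @cvgM (Cplx R) _ _ (dnbhs_filter l) _ _ _ _ (cvg_wl l) (H2 j hj). by rewrite mul0r.
rewrite /cofactor. apply: (@cvgM (Cplx R) C _ (dnbhs_filter l)); first exact: cvg_cst.
apply: (cvg_det (FF:=dnbhs_filter l)) => i k. have -> : (fun t => row' r (col' j (M t)) i k) = (fun t => M t (lift r i) (lift j k))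
  by apply: funext => t; rewrite !mxE.
rewrite !mxE. apply: H1. rewrite eq_sym. exact: neq_lift.
Qed.

Definition ctn (f : C -> C) (x : C) := f @ x --> f x.

Lemma ctn_id x : ctn (fun w => w) x.
Proof. exact: cvg_id. Qed.
Lemma ctn_cst c x : ctn (fun _ => c) x.
Proof. exact: (@cvg_cst (Cplx R) c C (nbhs x) (nbhs_filter x)). Qed.
Lemma ctnD f g x : ctn f x -> ctn g x -> ctn (fun w => f w + g w) x.
Proof. exact: (@cvgD (Cplx R) (Cplx R)^o C (nbhs x) (nbhs_filter x) f g). Qed.
Lemma ctnB f g x : ctn f x -> ctn g x -> ctn (fun w => f w - g w) x.
Proof. exact: (@cvgB (Cplx R) (Cplx R)^o C (nbhs x) (nbhs_filter x) f g). Qed.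
Lemma ctnM f g x : ctn f x -> ctn g x -> ctn (fun w => f w * g w) x.
Proof. exact: (@cvgM (Cplx R) C (nbhs x) (nbhs_filter x) f g). Qed.
Lemma ctnV f x : f x != 0 -> ctn f x -> ctn (fun w => (f w)^-1) x.
Proof. move=> h1 h2. exact: (@cvgV (Cplx R) C (nbhs x) (nbhs_filter x) f (f x) h1 h2). Qed.
Lemma ctn_sinh f x : ctn f x -> ctn (fun w => csinh (f w)) x.
Proof. exact: (cvg_csinh (FF:=nbhs_filter x)). Qed.
Lemma ctn_prod (I : Type) (r : seq I) (G : I -> C -> C) x :
  (forall i, ctn (G i) x) -> ctn (fun w => \prod_(i <- r) G i w) x.
Proof. exact: (cvg_bprod (FF:=nbhs_filter x)). Qed.

Lemma ctn_prod_mid (s1 s2 : seq C) (g : C -> C) x :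
  ctn g x -> ctn (fun w => \prod_(v <- s1 ++ w :: s2) g v) x.
Proof.
move=> H.
have -> : (fun w => \prod_(v <- s1 ++ w :: s2) g v) =
  (fun w => (\prod_(v <- s1) g v) * (g w * \prod_(v <- s2) g v)).
  by apply: funext => w; rewrite big_cat big_cons.
apply: ctnM; first exact: ctn_cst.
apply: ctnM; [exact: H | exact: ctn_cst].
Qed.

Lemma ctn_sh (c : C) x : ctn (fun w => csinh (w + c)) x.
Proof. apply: ctn_sinh. apply: ctnD; [exact: ctn_id | exact: ctn_cst]. Qed.

Variables (eta : C) (xi : seq C) (kappa : C).

Definition Ent (rho mu : C) (nu : seq C) : C :=
  afun eta xi mu * tfun eta rho mu * \prod_(v <- nu) csinh (v - mu + eta)
  - kappa * dfun xi mu * tfun eta mu rho * \prod_(v <- nu) csinh (v - mu - eta).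

Lemma OmegaE n (rows cols nu : seq C) (j k : 'I_n) :
  Omega eta xi kappa n rows cols nu j k = Ent (nth 0 rows j) (nth 0 cols k) nu.
Proof. by rewrite mxE. Qed.

Lemma Ent_perm rho mu nu nu' : perm_eq nu nu' -> Ent rho mu nu = Ent rho mu nu'.
Proof. by move=> p; rewrite /Ent; congr (_ * _ - _ * _); apply: perm_big. Qed.

Lemma Y_perm mu nu nu' : perm_eq nu nu' ->
  Yfun eta xi kappa mu nu = Yfun eta xi kappa mu nu'.
Proof. by move=> p; rewrite /Yfun; congr (_ * _ + _ * _); apply: perm_big. Qed.


Lemma ctn_shp (a b : C) x : ctn (fun v => csinh (v - a + b)) x.
Proof. apply: ctn_sinh. apply: ctnD; last exact: ctn_cst. apply: ctnB; [exact: ctn_id | exact: ctn_cst]. Qed.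
Lemma ctn_shm (a b : C) x : ctn (fun v => csinh (v - a - b)) x.
Proof. apply: ctn_sinh. apply: ctnB; last exact: ctn_cst. apply: ctnB; [exact: ctn_id | exact: ctn_cst]. Qed.

Lemma ctn_Ent_nu rho mu s1 s2 x : ctn (fun w => Ent rho mu (s1 ++ w :: s2)) x.
Proof.
rewrite /Ent.
apply: (ctnB (fun w => _ * \prod_(v <- s1 ++ w :: s2) csinh (v - mu + eta)) (fun w => _ * \prod_(v <- s1 ++ w :: s2) csinh (v - mu - eta))).
- apply: (ctnM (fun _ => _)); first exact: ctn_cst.
  exact: (ctn_prod_mid s1 s2 (fun v => csinh (v - mu + eta)) x (ctn_shp mu eta x)).
- apply: (ctnM (fun _ => _)); first exact: ctn_cst.
  exact: (ctn_prod_mid s1 s2 (fun v => csinh (v - mu - eta)) x (ctn_shm mu eta x)).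
Qed.

Lemma ctn_t1 mu x : csinh (x - mu) != 0 -> csinh (x - mu + eta) != 0 ->
  ctn (fun w => tfun eta w mu) x.
Proof.
move=> h1 h2. rewrite /tfun.
apply: (ctnM (fun _ => csinh eta) (fun w => (csinh (w - mu) * csinh (w - mu + eta))^-1)).
  exact: ctn_cst.
apply: (ctnV (fun w => csinh (w - mu) * csinh (w - mu + eta))); first by rewrite mulf_neq0.
apply: (ctnM (fun w => csinh (w - mu)) (fun w => csinh (w - mu + eta))); last exact: ctn_shp.
apply: (ctn_sinh (fun w => w - mu)). apply: (ctnB (fun w => w) (fun _ => mu)); [exact: ctn_id|exact: ctn_cst].
Qed.

Lemma ctn_t2 mu x : csinh (mu - x) != 0 -> csinh (mu - x + eta) != 0 ->
  ctn (fun w => tfun eta mu w) x.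
Proof.
move=> h1 h2. rewrite /tfun.
apply: (ctnM (fun _ => csinh eta) (fun w => (csinh (mu - w) * csinh (mu - w + eta))^-1)).
  exact: ctn_cst.
apply: (ctnV (fun w => csinh (mu - w) * csinh (mu - w + eta))); first by rewrite mulf_neq0.
have hb : ctn (fun w => mu - w) x.
  apply: (ctnB (fun _ => mu) (fun w => w)); [exact: ctn_cst|exact: ctn_id].
apply: (ctnM (fun w => csinh (mu - w)) (fun w => csinh (mu - w + eta))).
  exact: (ctn_sinh (fun w => mu - w)).
apply: (ctn_sinh (fun w => mu - w + eta)).
apply: (ctnD (fun w => mu - w) (fun _ => eta)); [exact: hb|exact: ctn_cst].
Qed.

Lemma ctn_Ent_row mu s1 s2 x :
  csinh (x - mu) != 0 -> csinh (x - mu + eta) != 0 ->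
  csinh (mu - x) != 0 -> csinh (mu - x + eta) != 0 ->
  ctn (fun w => Ent w mu (s1 ++ w :: s2)) x.
Proof.
move=> h1 h2 h3 h4. rewrite /Ent.
apply: (ctnB (fun w => _ * tfun eta w mu * \prod_(v <- s1 ++ w :: s2) csinh (v - mu + eta)) (fun w => _ * tfun eta mu w * \prod_(v <- s1 ++ w :: s2) csinh (v - mu - eta))).
- apply: (ctnM (fun w => _ * tfun eta w mu)).
    apply: (ctnM (fun _ => _)); first exact: ctn_cst. exact: ctn_t1.
  exact: (ctn_prod_mid s1 s2 (fun v => csinh (v - mu + eta)) x (ctn_shp mu eta x)).
- apply: (ctnM (fun w => _ * tfun eta mu w)).
    apply: (ctnM (fun _ => _)); first exact: ctn_cst. exact: ctn_t2.
  exact: (ctn_prod_mid s1 s2 (fun v => csinh (v - mu - eta)) x (ctn_shm mu eta x)).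
Qed.

Lemma csinhN (x : C) : csinh (- x) = - csinh x.
Proof. by rewrite /csinh opprK -mulNr opprB. Qed.

Lemma dn_neq (l : C) : \forall w \near l^', w - l != 0.
Proof. move: (nbhs_dnbhs_neq l). apply: filterS => w. by rewrite subr_eq0. Qed.

Lemma res_t1 (l : C) : csinh eta != 0 ->
  (fun w => (w - l) * tfun eta w l) @ l^' --> (1:C).
Proof.
move=> he.
have -> : (fun w => (w - l) * tfun eta w l) =
   (fun w => ((w - l) / csinh (w - l)) * (csinh eta * (csinh (w - l + eta))^-1)).
  apply: funext => w. rewrite /tfun invfM. ring.
have H1 := csinh_lin (FF:=dnbhs_filter l) (cvg_wl l) (dn_neq l).
have H2 : (fun w => csinh eta * (csinh (w - l + eta))^-1) @ l^' --> (1:C).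
  have : ctn (fun w => csinh eta * (csinh (w - l + eta))^-1) l.
    apply: (ctnM (fun _ => _)); first exact: ctn_cst.
    apply: (ctnV (fun w => csinh (w - l + eta))); last exact: ctn_shp.
    by rewrite subrr add0r.
  move/cvg_dn. by rewrite subrr add0r divff.
have := @cvgM (Cplx R) C _ (dnbhs_filter l) _ _ _ _ H1 H2. by rewrite mul1r.
Qed.

Lemma res_t2 (l : C) : csinh eta != 0 ->
  (fun w => (w - l) * tfun eta l w) @ l^' --> (-1:C).
Proof.
move=> he.
have -> : (fun w => (w - l) * tfun eta l w) =
   (fun w => - ((w - l) / csinh (w - l)) * (csinh eta * (csinh (l - w + eta))^-1)).
  apply: funext => w. rewrite /tfun invfM -opprB csinhN invrN. ring.
have H1 := csinh_lin (FF:=dnbhs_filter l) (cvg_wl l) (dn_neq l).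
have H1' := @cvgN (Cplx R) (Cplx R)^o C _ (dnbhs_filter l) _ _ H1.
have H2 : (fun w => csinh eta * (csinh (l - w + eta))^-1) @ l^' --> (1:C).
  have : ctn (fun w => csinh eta * (csinh (l - w + eta))^-1) l.
    apply: (ctnM (fun _ => _)); first exact: ctn_cst.
    apply: (ctnV (fun w => csinh (l - w + eta))).
      by rewrite subrr add0r.
    apply: (ctn_sinh (fun w => l - w + eta)).
    apply: (ctnD (fun w => l - w) (fun _ => eta)); last exact: ctn_cst.
    apply: (ctnB (fun _ => l) (fun w => w)); [exact: ctn_cst|exact: ctn_id].
  move/cvg_dn. by rewrite subrr add0r divff.
have := @cvgM (Cplx R) C _ (dnbhs_filter l) _ _ _ _ H1' H2. by rewrite mulr1.
Qed.

Lemma res_Ent (l : C) s1 s2 : csinh eta != 0 ->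
  (fun w => (w - l) * Ent w l (s1 ++ w :: s2)) @ l^' --> Yfun eta xi kappa l (s1 ++ l :: s2).
Proof.
move=> he.
pose P w := \prod_(v <- s1 ++ w :: s2) csinh (v - l + eta).
pose Q w := \prod_(v <- s1 ++ w :: s2) csinh (v - l - eta).
have -> : (fun w => (w - l) * Ent w l (s1 ++ w :: s2)) =
  (fun w => afun eta xi l * ((w - l) * tfun eta w l) * P w
          - kappa * dfun xi l * ((w - l) * tfun eta l w) * Q w).
  apply: funext => w. rewrite /Ent /P /Q. ring.
have HP : P @ l^' --> P l := cvg_dn _ _ _ (ctn_prod_mid s1 s2 (fun v => csinh (v - l + eta)) l (ctn_shp l eta l)).
have HQ : Q @ l^' --> Q l := cvg_dn _ _ _ (ctn_prod_mid s1 s2 (fun v => csinh (v - l - eta)) l (ctn_shm l eta l)).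
have cM := fun f g (x y : C) (h1 : f @ l^' --> x) (h2 : g @ l^' --> y) => @cvgM (Cplx R) C _ (dnbhs_filter l) f g x y h1 h2.
have cC := fun x : C => @cvg_cst (Cplx R) x C _ (dnbhs_filter l).
have := @cvgB (Cplx R) (Cplx R)^o C _ (dnbhs_filter l) _ _ _ _
   (cM _ _ _ _ (cM _ _ _ _ (cC (afun eta xi l)) (res_t1 l he)) HP)
   (cM _ _ _ _ (cM _ _ _ _ (cC (kappa * dfun xi l)) (res_t2 l he)) HQ).
have -> : afun eta xi l * 1 * P l - kappa * dfun xi l * -1 * Q l = Yfun eta xi kappa l (s1 ++ l :: s2).
  rewrite /Yfun /P /Q. ring.
by [].
Qed.

Lemma nth_bump (s : seq C) n i : nth 0 s (bump n i) = nth 0 (take n s ++ drop n.+1 s) i.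
Proof.
rewrite /bump nth_cat size_take.
case: (ltnP n (size s)) => hs.
  case: (ltnP i n) => hi.
    by rewrite add0n nth_take.
  rewrite add1n nth_drop. congr nth. lia.
case: (ltnP i (size s)) => hi.
  have hin : (n <= i)%N = false by apply/negbTE; rewrite -ltnNge; exact: leq_trans hi hs.
  by rewrite hin add0n nth_take //; exact: leq_trans hi hs.
rewrite drop_oversize ?nth_nil; last exact: leq_trans hs _.
rewrite nth_default //. case: (n <= i)%N => /=; lia.
Qed.

Lemma generic_del (s : seq C) k : generic_points eta s ->
  generic_points eta (take k s ++ drop k.+1 s).
Proof.
move=> G i j hi hj hij.
rewrite -!nth_bump.
have hsz : forall x, (x < size (take k s ++ drop k.+1 s))%N -> (bump k x < size s)%N.
  move=> x. rewrite size_cat size_take size_drop /bump.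
  case: (ltnP k (size s)) => hk; case: (leqP k x) => hx /=; lia.
apply: G; [exact: hsz | exact: hsz |].
move=> /(congr1 (unbump k)). rewrite !bumpK. exact: hij.
Qed.

Lemma nth_at (z ws : seq C) w : nth 0 (z ++ w :: ws) (size z) = w.
Proof. by rewrite nth_cat ltnn subnn. Qed.

Lemma nth_off (z ws : seq C) w l i : i != size z ->
  nth 0 (z ++ w :: ws) i = nth 0 (z ++ l :: ws) i.
Proof.
move=> h. rewrite !nth_cat. case: ltnP => // hi.
have : (i - size z)%N = (i - size z).-1.+1 by rewrite prednK // subn_gt0 ltn_neqAle eq_sym h hi.
by move=> ->.
Qed.

Lemma gen_lam (z lam : seq C) j k : generic_points eta (z ++ lam) ->
  (j < size lam)%N -> (k < size lam)%N -> j != k ->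
  csinh (nth 0 lam j - nth 0 lam k) != 0 /\ csinh (nth 0 lam j - nth 0 lam k + eta) != 0.
Proof.
move=> G hj hk hjk.
have := G (size z + j)%N (size z + k)%N.
have e1 : (size z + j < size z)%N = false by rewrite ltnNge leq_addr.
have e2 : (size z + k < size z)%N = false by rewrite ltnNge leq_addr.
rewrite !nth_cat !size_cat !ltn_add2l e1 e2 !addKn.
move=> H. have [h1 h2] := H hj hk (fun E => (negP hjk) (introT eqP (addnI E))).
by split; apply/eqP.
Qed.

Definition good (c : seq C -> C) := forall pre post x, ctn (fun w => c (pre ++ w :: post)) x.

Lemma Omega_perm n rows cols nu nu' : perm_eq nu nu' ->
  Omega eta xi kappa n rows cols nu = Omega eta xi kappa n rows cols nu'.
Proof. move=> p; apply/matrixP => i j. rewrite !OmegaE. exact: Ent_perm. Qed.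

Lemma drop_mid (z ws : seq C) l : drop (size z).+1 (z ++ l :: ws) = ws.
Proof. elim: z => [|x z IH] /=; [exact: drop0 | exact: IH]. Qed.

Lemma step_res N n (z ws lam e : seq C) (c : seq C -> C) (Hn : (n < N)%N) :
  size z = n -> size lam = N -> csinh eta != 0 -> generic_points eta (z ++ lam) ->
  good c ->
  residue (fun w => c (w :: ws) * \det (Omega eta xi kappa N (z ++ w :: ws) lam (z ++ w :: ws ++ e))) (nth 0 lam n)
  = c (nth 0 lam n :: ws) * Yfun eta xi kappa (nth 0 lam n) (z ++ nth 0 lam n :: ws ++ e)
    * \det (Omega eta xi kappa N.-1 (z ++ ws) (take n lam ++ drop n.+1 lam) (z ++ ws ++ nth 0 lam n :: e)).
Proof.
move=> hz hlam he G Gc.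
set l := nth 0 lam n.
pose r : 'I_N := Ordinal Hn.
pose M w := Omega eta xi kappa N (z ++ w :: ws) lam (z ++ w :: ws ++ e).
pose A := M l.
have H1 : forall i j, i != r -> (fun w => M w i j) @ l^' --> A i j.
  move=> i j hi.
  have hi' : (i : nat) != size z by rewrite hz.
  have -> : (fun w => M w i j) = (fun w => Ent (nth 0 (z ++ l :: ws) i) (nth 0 lam j) (z ++ w :: ws ++ e)).
    apply: funext => w. by rewrite /M OmegaE (nth_off z ws w l i hi').
  rewrite /A /M OmegaE. apply: cvg_dn. exact: ctn_Ent_nu.
have H2 : forall j, j != r -> (fun w => M w r j) @ l^' --> A r j.
  move=> j hj.
  have hjn : (j : nat) != n by [].
  have -> : (fun w => M w r j) = (fun w => Ent w (nth 0 lam j) (z ++ w :: ws ++ e)).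
    apply: funext => w. by rewrite /M OmegaE /= -hz nth_at.
  rewrite /A /M OmegaE /= -hz nth_at. apply: cvg_dn.
  have hjl : (j < size lam)%N by rewrite hlam.
  have hnl : (n < size lam)%N by rewrite hlam.
  have [g1 g2] := gen_lam z lam n j G hnl hjl (negbT (introF eqP (fun E => (negP hjn) (introT eqP (esym E))))).
  have [g3 g4] := gen_lam z lam j n G hjl hnl hjn.
  exact: ctn_Ent_row.
have H3 : (fun w => (w - l) * M w r r) @ l^' --> Yfun eta xi kappa l (z ++ l :: ws ++ e).
  have -> : (fun w => (w - l) * M w r r) = (fun w => (w - l) * Ent w l (z ++ w :: ws ++ e)).
    apply: funext => w. by rewrite /M OmegaE /= -hz nth_at hz.
  exact: res_Ent.
have Hd := res_det _ r M A l _ H1 H2 H3.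
have Hc : (fun w => c (w :: ws)) @ l^' --> c (l :: ws) := cvg_dn _ _ _ (Gc [::] ws l).
have Ht := @cvgM (Cplx R) C _ (dnbhs_filter l) _ _ _ _ Hc Hd.
rewrite /residue. apply: (cvg_lim hC).
have -> : (fun w => (w - l) * (c (w :: ws) * \det (Omega eta xi kappa N (z ++ w :: ws) lam (z ++ w :: ws ++ e))))
   = (fun w => c (w :: ws) * ((w - l) * \det (M w))).
  apply: funext => w. rewrite /M. ring.
have Hcof : cofactor A r r = \det (Omega eta xi kappa N.-1 (z ++ ws)
          (take n lam ++ drop n.+1 lam) (z ++ ws ++ l :: e)).
  rewrite /cofactor -signr_odd addnn odd_double expr0 mul1r. congr (\det _).
  apply/matrixP => i k. rewrite [RHS]OmegaE !mxE /A /M.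
  rewrite -[LHS]/(Ent (nth 0 (z ++ l :: ws) (lift r i)) (nth 0 lam (lift r k)) (z ++ l :: ws ++ e)).
  rewrite (Ent_perm (nth 0 (z ++ l :: ws) (lift r i)) (nth 0 lam (lift r k)) _ (z ++ ws ++ l :: e)); last first.
    rewrite perm_cat2l -cat1s perm_catCA //.
  congr Ent.
  - rewrite /= nth_bump -hz take_size_cat // drop_mid //.
  - by rewrite /= nth_bump.
rewrite -Hcof -mulrA. exact: Ht.
Qed.

Lemma ctn_Y_nu mu s1 s2 x : ctn (fun w => Yfun eta xi kappa mu (s1 ++ w :: s2)) x.
Proof.
rewrite /Yfun.
apply: (ctnD (fun w => _ * \prod_(v <- s1 ++ w :: s2) csinh (v - mu + eta)) (fun w => _ * \prod_(v <- s1 ++ w :: s2) csinh (v - mu - eta))).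
- apply: (ctnM (fun _ => _)); first exact: ctn_cst.
  exact: (ctn_prod_mid s1 s2 (fun v => csinh (v - mu + eta)) x (ctn_shp mu eta x)).
- apply: (ctnM (fun _ => _)); first exact: ctn_cst.
  exact: (ctn_prod_mid s1 s2 (fun v => csinh (v - mu - eta)) x (ctn_shm mu eta x)).
Qed.

Lemma good_step (c : seq C -> C) (z e : seq C) l : good c ->
  good (fun ws => c (l :: ws) * Yfun eta xi kappa l (z ++ l :: ws ++ e)).
Proof.
move=> Gc pre post x.
apply: (ctnM (fun w => c (l :: pre ++ w :: post)) (fun w => Yfun eta xi kappa l (z ++ l :: (pre ++ w :: post) ++ e))).
  exact: (Gc (l :: pre) post x).
have -> : (fun w => Yfun eta xi kappa l (z ++ l :: (pre ++ w :: post) ++ e)) =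
   (fun w => Yfun eta xi kappa l ((z ++ l :: pre) ++ w :: (post ++ e))).
  apply: funext => w. by rewrite -catA /= -catA.
exact: ctn_Y_nu.
Qed.

Lemma main_ind m : forall N n (z lam e : seq C) (c : seq C -> C),
  N = (n + m)%N -> size z = n -> size lam = N -> csinh eta != 0 ->
  generic_points eta (z ++ lam) -> good c ->
  iter_residue (fun w => c w * \det (Omega eta xi kappa N (z ++ w) lam (z ++ w ++ e))) (drop n lam)
  = c (drop n lam) * (\prod_(a <- drop n lam) Yfun eta xi kappa a (z ++ drop n lam ++ e))
    * \det (Omega eta xi kappa n z (take n lam) (z ++ drop n lam ++ e)).
Proof.
elim: m => [|m IH] N n z lam e c hN hz hlam he G Gc.
  rewrite addn0 in hN. subst n.
  rewrite drop_oversize; last by rewrite hlam hN.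
  rewrite take_oversize; last by rewrite hlam hN.
  by rewrite big_nil mulr1 /= !cats0 hN.
have Hn : (n < N)%N by rewrite hN addnS ltnS leq_addr.
have hl : (n < size lam)%N by rewrite hlam.
rewrite (drop_nth 0 hl) /=.
set l := nth 0 lam n.
set rest := drop n.+1 lam.
pose lam' := take n lam ++ drop n.+1 lam.
pose c' := fun ws => c (l :: ws) * Yfun eta xi kappa l (z ++ l :: ws ++ e).
have E : (fun ws => residue (fun w => c (w :: ws) * \det (Omega eta xi kappa N (z ++ w :: ws) lam (z ++ w :: ws ++ e))) l)
   = (fun ws => c' ws * \det (Omega eta xi kappa N.-1 (z ++ ws) lam' (z ++ ws ++ l :: e))).
  apply: funext => ws. by rewrite step_res.
rewrite E.
have hN' : N.-1 = (n + m)%N by rewrite hN addnS.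
have hsz : size lam' = N.-1.
  rewrite /lam' size_cat size_take size_drop hl hlam. lia.
have G' : generic_points eta (z ++ lam').
  have := generic_del (z ++ lam) (size z + n) G.
  have e1 : (size z + n < size z)%N = false by rewrite ltnNge leq_addr.
  have e2 : ((size z + n).+1 < size z)%N = false by rewrite ltnNge -addnS leq_addr.
  rewrite take_cat drop_cat e1 e2 addKn -addnS addKn -catA. by [].
have Gc' : good c' := good_step c z e l Gc.
have IH' := IH N.-1 n z lam' (l :: e) c' hN' hz hsz he G' Gc'.
have hd : drop n lam' = rest by rewrite /lam' drop_size_cat // size_take hl.
have ht : take n lam' = take n lam by rewrite /lam' take_size_cat // size_take hl.
rewrite hd ht in IH'.
rewrite IH' /c' big_cons.
have p : perm_eq (z ++ rest ++ l :: e) (z ++ (l :: rest) ++ e).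
  by rewrite perm_cat2l -cat1s perm_catCA.
rewrite (Omega_perm _ _ _ _ _ p).
rewrite !mulrA. congr (_ * _ * _).
by apply: eq_bigr => a _; apply: Y_perm.
Qed.

End S.

Theorem mainTheorem8 (R : realType) (eta : Cplx R) (xi : seq (Cplx R))
    (kappa : Cplx R) (n N : nat) (lam z : seq (Cplx R)) :
  csinh eta != 0 ->
  (n <= N)%N -> size lam = N -> size z = n ->
  generic_points eta (z ++ lam) ->
  iter_residue
    (fun w => \det (Omega eta xi kappa N (z ++ w) lam (z ++ w)))
    (drop n lam)
  = (\prod_(a <- drop n lam) Yfun eta xi kappa a (z ++ drop n lam))
    * \det (Omega eta xi kappa n z (take n lam) (z ++ drop n lam)).
Proof.
move=> he hn hlam hz G.
have Gc : @good R (fun _ : seq (Cplx R) => (1 : Cplx R)).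
  move=> pre post x. exact: ctn_cst.
have := @main_ind R eta xi kappa (N - n) N n z lam [::] (fun _ => 1) (esym (subnKC hn)) hz hlam he G Gc.
have -> : (fun w => (fun _ : seq (Cplx R) => (1 : Cplx R)) w * \det (Omega eta xi kappa N (z ++ w) lam (z ++ w ++ [::])))
   = (fun w => \det (Omega eta xi kappa N (z ++ w) lam (z ++ w))).
  apply: funext => w. by rewrite mul1r cats0.
by rewrite mul1r !cats0.
Qed.
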